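(* Let $H$ be a separable Hilbert space, $0<p<1$, and $T$ any nonzero bounded linear operator on $H$. Then there exists a frame $\{f_n\}$ for $H$ such that $\{\langle Tf_n,f_n\rangle\}\notin\ell^p$.
   Context: A sequence $\{f_n\}$ in $H$ is a frame if there are constants $0<C_1\le C_2$ such that $C_1\|f\|^2\le\sum_n|\langle f,f_n\rangle|^2\le C_2\|f\|^2$ for all $f\in H$. *)

(* Defs.v *)
From Stdlib Require Import Reals Lra.
Open Scope R_scope.

Record Cplx := mkC { re : R; im : R }.
Definition Czero : Cplx := mkC 0 0.
Definition Cone : Cplx := mkC 1 0.
Definition Cadd (a b : Cplx) : Cplx := mkC (re a + re b) (im a + im b).
Definition Cmul (a b : Cplx) : Cplx :=
  mkC (re a * re b - im a * im b) (re a * im b + im a * re b).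
Definition Cconj (a : Cplx) : Cplx := mkC (re a) (- im a).
Definition Cmod (a : Cplx) : R := sqrt (re a * re a + im a * im a).

(** Complex inner-product spaces (inner product linear in the first
    argument, conjugate-linear in the second). *)
Record InnerProductSpace := {
  carrier :> Type;
  vzero : carrier;
  vadd : carrier -> carrier -> carrier;
  vopp : carrier -> carrier;
  vscal : Cplx -> carrier -> carrier;
  inner : carrier -> carrier -> Cplx;
  vaddA : forall x y z, vadd x (vadd y z) = vadd (vadd x y) z;
  vaddC : forall x y, vadd x y = vadd y x;
  vadd0 : forall x, vadd x vzero = x;
  vaddN : forall x, vadd x (vopp x) = vzero;
  vscalA : forall a b x, vscal a (vscal b x) = vscal (Cmul a b) x;
  vscal1 : forall x, vscal Cone x = x;
  vscalDl : forall a b x, vscal (Cadd a b) x = vadd (vscal a x) (vscal b x);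
  vscalDr : forall a x y, vscal a (vadd x y) = vadd (vscal a x) (vscal a y);
  inner_addl : forall x y z, inner (vadd x y) z = Cadd (inner x z) (inner y z);
  inner_scall : forall a x y, inner (vscal a x) y = Cmul a (inner x y);
  inner_conj : forall x y, inner y x = Cconj (inner x y);
  inner_pos : forall x, 0 <= re (inner x x);
  inner_def : forall x, re (inner x x) = 0 -> x = vzero
}.

Section HS.
Variable H : InnerProductSpace.

Definition vnorm (x : H) : R := sqrt (re (inner H x x)).
Definition vsub (x y : H) : H := vadd H x (vopp H y).

Definition complete : Prop :=
  forall u : nat -> H,
    (forall eps, eps > 0 -> exists N, forall m n, (m >= N)%nat -> (n >= N)%nat ->
        vnorm (vsub (u m) (u n)) < eps) ->
    exists l : H, forall eps, eps > 0 -> exists N, forall n, (n >= N)%nat ->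
        vnorm (vsub (u n) l) < eps.

Definition separable : Prop :=
  exists d : nat -> H, forall x eps, eps > 0 -> exists n, vnorm (vsub x (d n)) < eps.

Definition bounded_linear (T : H -> H) : Prop :=
  (forall x y, T (vadd H x y) = vadd H (T x) (T y)) /\
  (forall a x, T (vscal H a x) = vscal H a (T x)) /\
  (exists M, forall x, vnorm (T x) <= M * vnorm x).

Definition is_frame (f : nat -> H) : Prop :=
  exists C1 C2, 0 < C1 /\ C1 <= C2 /\
    forall x : H, exists S,
      infinite_sum (fun n => (Cmod (inner H x (f n)))^2) S /\
      C1 * (vnorm x)^2 <= S /\ S <= C2 * (vnorm x)^2.
End HS.

(** t^p for t >= 0 (with 0^p = 0 for p > 0) *)
Definition rpow (t p : R) : R := if Rlt_dec 0 t then Rpower t p else 0.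

Definition in_lp (p : R) (a : nat -> Cplx) : Prop :=
  exists S, infinite_sum (fun n => rpow (Cmod (a n)) p) S.

(* Main.v *)
Require Import Defs.
From Stdlib Require Import Reals Lra Lia ZArith Classical.
Open Scope R_scope.

Lemma Ceq (a b : Cplx) : re a = re b -> im a = im b -> a = b.
Proof. destruct a, b; simpl; intros; subst; reflexivity. Qed.

Ltac csolve := apply Ceq; simpl; try ring; try lra.

Lemma in0l {H : InnerProductSpace} (y : H) : inner H (vzero H) y = Czero.
Proof.
  pose proof (inner_addl H (vzero H) (vzero H) y) as E.
  rewrite vadd0 in E. destruct (inner H (vzero H) y) as [a b].
  unfold Cadd in E; simpl in E. injection E; intros. csolve.
Qed.

Lemma in_addr {H : InnerProductSpace} (x y z : H) :
  inner H x (vadd H y z) = Cadd (inner H x y) (inner H x z).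
Proof.
  rewrite inner_conj, inner_addl, (inner_conj H y x), (inner_conj H z x). csolve.
Qed.

Lemma in_scalr {H : InnerProductSpace} a (x y : H) :
  inner H x (vscal H a y) = Cmul (Cconj a) (inner H x y).
Proof.
  rewrite inner_conj, inner_scall, (inner_conj H y x). csolve.
Qed.

Lemma in0r {H : InnerProductSpace} (y : H) : inner H y (vzero H) = Czero.
Proof. rewrite inner_conj, in0l. csolve. Qed.

Lemma in_oppl {H : InnerProductSpace} (x y : H) :
  inner H (vopp H x) y = mkC (- re (inner H x y)) (- im (inner H x y)).
Proof.
  pose proof (inner_addl H x (vopp H x) y) as E. rewrite vaddN, in0l in E.
  destruct (inner H x y), (inner H (vopp H x) y). unfold Cadd in E; simpl in *.
  injection E; intros. csolve.
Qed.

Lemma in_subl {H : InnerProductSpace} (x y z : H) :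
  inner H (vsub H x y) z = mkC (re (inner H x z) - re (inner H y z)) (im (inner H x z) - im (inner H y z)).
Proof. unfold vsub. rewrite inner_addl, in_oppl. csolve. Qed.

Lemma in_subr {H : InnerProductSpace} (x y z : H) :
  inner H z (vsub H x y) = mkC (re (inner H z x) - re (inner H z y)) (im (inner H z x) - im (inner H z y)).
Proof. rewrite inner_conj, in_subl, (inner_conj H x z), (inner_conj H y z). csolve. Qed.

Lemma im_self {H : InnerProductSpace} (x : H) : im (inner H x x) = 0.
Proof. pose proof (inner_conj H x x) as E. destruct (inner H x x). injection E. simpl. lra. Qed.

Lemma scal0 {H : InnerProductSpace} a : vscal H a (vzero H) = vzero H.
Proof.
  apply inner_def. rewrite inner_scall, in_scalr, in0r. simpl. ring.
Qed.

Lemma scal0l {H : InnerProductSpace} (x : H) : vscal H (mkC 0 0) x = vzero H.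
Proof.
  apply inner_def. rewrite inner_scall, in_scalr. simpl. ring.
Qed.

Lemma vnorm2 {H : InnerProductSpace} (x : H) : vnorm H x ^ 2 = re (inner H x x).
Proof. unfold vnorm. apply pow2_sqrt, inner_pos. Qed.

Lemma Cmod2 z : Cmod z ^ 2 = re z * re z + im z * im z.
Proof. unfold Cmod. apply pow2_sqrt. nra. Qed.

Fixpoint vsum {H : InnerProductSpace} (g : nat -> H) (n : nat) : H :=
  match n with O => vzero H | S m => vadd H (vsum g m) (g m) end.
Fixpoint Csum (g : nat -> Cplx) (n : nat) : Cplx :=
  match n with O => Czero | S m => Cadd (Csum g m) (g m) end.
Fixpoint rs (g : nat -> R) (n : nat) : R :=
  match n with O => 0 | S m => rs g m + g m end.

Lemma in_vsum_l {H : InnerProductSpace} (g : nat -> H) n z :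
  inner H (vsum g n) z = Csum (fun k => inner H (g k) z) n.
Proof. induction n; simpl. apply in0l. rewrite inner_addl, IHn; reflexivity. Qed.

Lemma in_vsum_r {H : InnerProductSpace} (g : nat -> H) n z :
  inner H z (vsum g n) = Csum (fun k => inner H z (g k)) n.
Proof. induction n; simpl. apply in0r. rewrite in_addr, IHn; reflexivity. Qed.

Lemma vsum_ext {H : InnerProductSpace} (g g' : nat -> H) n :
  (forall k, (k < n)%nat -> g k = g' k) -> vsum g n = vsum g' n.
Proof. induction n; simpl; intros E; auto. rewrite IHn, E; auto. Qed.

Lemma Csum_ext g g' n :
  (forall k, (k < n)%nat -> g k = g' k) -> Csum g n = Csum g' n.
Proof. induction n; simpl; intros E; auto. rewrite IHn, E; auto. Qed.

Lemma rs_ext g g' n :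
  (forall k, (k < n)%nat -> g k = g' k) -> rs g n = rs g' n.
Proof. induction n; simpl; intros E; auto. rewrite IHn, E; auto. Qed.

Lemma Csum_zero g n : (forall k, (k < n)%nat -> g k = Czero) -> Csum g n = Czero.
Proof. induction n; simpl; intros E; auto. rewrite IHn, E; auto. csolve. Qed.

Lemma Csum_single g n j : (j < n)%nat ->
  (forall k, (k < n)%nat -> k <> j -> g k = Czero) -> Csum g n = g j.
Proof.
  induction n; intros Hj E. lia. simpl.
  destruct (Nat.eq_dec j n) as [->|Hne].
  - rewrite Csum_zero. destruct (g n); csolve. intros; apply E; lia.
  - rewrite IHn, (E n); try lia. destruct (g j); csolve. intros; apply E; lia.
Qed.

Lemma re_Csum g n : re (Csum g n) = rs (fun k => re (g k)) n.
Proof. induction n; simpl; auto. rewrite IHn; auto. Qed.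

Lemma rs_add g a b : rs g (a + b) = rs g a + rs (fun j => g (a + j)%nat) b.
Proof. induction b; simpl. rewrite Nat.add_0_r; ring. rewrite Nat.add_succ_r; simpl; rewrite IHb; ring. Qed.

Lemma rs_nonneg g n : (forall k, 0 <= g k) -> 0 <= rs g n.
Proof. intros; induction n; simpl. lra. specialize (H n). lra. Qed.

Lemma rs_mono g m n : (forall k, 0 <= g k) -> (m <= n)%nat -> rs g m <= rs g n.
Proof.
  intros Hg Hmn. replace n with (m + (n - m))%nat by lia. rewrite rs_add.
  pose proof (rs_nonneg (fun j => g (m + j)%nat) (n - m) ltac:(intros; apply Hg)). lra.
Qed.

Lemma rs_le g g' n : (forall k, g k <= g' k) -> rs g n <= rs g' n.
Proof. intros E; induction n; simpl. lra. specialize (E n); lra. Qed.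

Lemma rs_plus g g' n : rs (fun k => g k + g' k) n = rs g n + rs g' n.
Proof. induction n; simpl. ring. rewrite IHn; ring. Qed.

Lemma rs_scal c g n : rs (fun k => c * g k) n = c * rs g n.
Proof. induction n; simpl. ring. rewrite IHn; ring. Qed.

Lemma rs_const c n : rs (fun _ => c) n = INR n * c.
Proof. induction n; simpl rs. simpl; ring. rewrite IHn, S_INR; ring. Qed.

Lemma rs_pair g n : rs g (2 * n) = rs (fun k => g (2 * k)%nat + g (S (2 * k))) n.
Proof.
  induction n. reflexivity.
  replace (2 * S n)%nat with (S (S (2 * n))) by lia. change (rs g (S (S (2 * n)))) with (rs g (2 * n) + g (2 * n)%nat + g (S (2 * n))). rewrite IHn. cbn [rs]. ring.
Qed.

Lemma sum_f_rs g n : sum_f_R0 g n = rs g (S n).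
Proof. induction n; simpl. ring. rewrite IHn; simpl; ring. Qed.

Definition proj {H : InnerProductSpace} (E : nat -> H) (m : nat) (x : H) : H :=
  vsum (fun k => vscal H (inner H x (E k)) (E k)) m.

Definition resid {H : InnerProductSpace} (d : nat -> H) (E : nat -> H) (m : nat) : H :=
  vsub H (d m) (proj E m (d m)).

Definition nrm {H : InnerProductSpace} (v : H) : H :=
  vscal H (mkC (/ sqrt (re (inner H v v))) 0) v.

Fixpoint GS {H : InnerProductSpace} (d : nat -> H) (n : nat) : nat -> H :=
  match n with
  | O => fun _ => vzero H
  | S m => fun k => if Nat.eqb k m then nrm (resid d (GS d m) m) else GS d m k
  end.

Definition ee {H : InnerProductSpace} (d : nat -> H) (k : nat) : H := GS d (S k) k.

Lemma GS_ee {H : InnerProductSpace} (d : nat -> H) m k : (k < m)%nat -> GS d m k = ee d k.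
Proof.
  induction m; intros Hk. lia. simpl.
  destruct (Nat.eqb_spec k m) as [->|Hne]. unfold ee; simpl; rewrite Nat.eqb_refl; reflexivity. apply IHm; lia.
Qed.

Lemma ee_eq {H : InnerProductSpace} (d : nat -> H) m : ee d m = nrm (resid d (ee d) m).
Proof.
  unfold ee at 1. simpl. rewrite Nat.eqb_refl. unfold resid, proj.
  f_equal. f_equal. apply vsum_ext. intros k Hk. rewrite GS_ee; auto.
Qed.

Lemma nrm_unit {H : InnerProductSpace} (v : H) : inner H (nrm v) (nrm v) = Cone \/ nrm v = vzero H.
Proof.
  unfold nrm. destruct (Req_dec (re (inner H v v)) 0) as [Z|NZ].
  - right. rewrite (inner_def H v Z). apply scal0.
  - left. rewrite inner_scall, in_scalr. pose proof (inner_pos H v). pose proof (im_self v).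
    set (r := re (inner H v v)) in *.
    assert (0 < sqrt r) by (apply sqrt_lt_R0; lra).
    assert (sqrt r * sqrt r = r) by (apply sqrt_sqrt; lra).
    destruct (inner H v v) as [a b]; simpl in *. subst r b.
    apply Ceq; simpl; field_simplify; try lra. rewrite <- H3 at 1. field. lra.
Qed.

Lemma nrm_back {H : InnerProductSpace} (v : H) :
  vscal H (mkC (sqrt (re (inner H v v))) 0) (nrm v) = v.
Proof.
  unfold nrm. destruct (Req_dec (re (inner H v v)) 0) as [Z|NZ].
  - rewrite (inner_def H v Z), !scal0. reflexivity.
  - rewrite vscalA. pose proof (inner_pos H v).
    assert (0 < sqrt (re (inner H v v))) by (apply sqrt_lt_R0; lra).
    replace (Cmul _ _) with Cone. apply vscal1. csolve. field. lra.
Qed.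

Definition unitish {H : InnerProductSpace} (e : nat -> H) : Prop :=
  forall i, inner H (e i) (e i) = Cone \/ e i = vzero H.
Definition orth {H : InnerProductSpace} (e : nat -> H) (n : nat) : Prop :=
  forall i j, (i < n)%nat -> (j < n)%nat -> i <> j -> inner H (e i) (e j) = Czero.

Lemma proj_in {H : InnerProductSpace} (e : nat -> H) n x j :
  unitish e -> orth e n -> (j < n)%nat -> inner H (proj e n x) (e j) = inner H x (e j).
Proof.
  intros U O Hj. unfold proj. rewrite in_vsum_l.
  rewrite (Csum_single _ _ j Hj).
  - rewrite inner_scall. destruct (U j) as [E|E]; rewrite E.
    + destruct (inner H x (e j)); csolve.
    + rewrite in0r; csolve.
  - intros k Hk Hkj. rewrite inner_scall, (O k j); auto. csolve.
Qed.

Lemma resid_orth {H : InnerProductSpace} (e : nat -> H) n x j :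
  unitish e -> orth e n -> (j < n)%nat -> inner H (vsub H x (proj e n x)) (e j) = Czero.
Proof.
  intros U O Hj. rewrite in_subl, proj_in; auto. csolve.
Qed.

Lemma in_comb_zero {H : InnerProductSpace} (e : nat -> H) c n z :
  (forall j, (j < n)%nat -> inner H z (e j) = Czero) ->
  inner H z (vsum (fun k => vscal H (c k) (e k)) n) = Czero.
Proof.
  intros Z. rewrite in_vsum_r. apply Csum_zero. intros k Hk. rewrite in_scalr, Z; auto. csolve.
Qed.

Lemma ee_unit {H : InnerProductSpace} (d : nat -> H) : unitish (ee d).
Proof. intros i. rewrite ee_eq. apply nrm_unit. Qed.

Lemma ee_orth {H : InnerProductSpace} (d : nat -> H) n : orth (ee d) n.
Proof.
  induction n. intros i j Hi; lia.
  assert (K : forall j, (j < n)%nat -> inner H (ee d n) (ee d j) = Czero).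
  { intros j Hj. rewrite (ee_eq d n). unfold nrm. rewrite inner_scall.
    unfold resid. rewrite resid_orth; auto. csolve. apply ee_unit. }
  intros i j Hi Hj Hij.
  destruct (Nat.eq_dec i n) as [->|Hi']; destruct (Nat.eq_dec j n) as [->|Hj'].
  - congruence.
  - apply K; lia.
  - rewrite inner_conj, K by lia. csolve.
  - apply IHn; lia.
Qed.

Lemma d_span {H : InnerProductSpace} (d : nat -> H) n :
  exists c, d n = vsum (fun k => vscal H (c k) (ee d k)) (S n).
Proof.
  set (v := resid d (ee d) n).
  exists (fun k => if Nat.ltb k n then inner H (d n) (ee d k) else mkC (sqrt (re (inner H v v))) 0).
  simpl. rewrite Nat.ltb_irrefl.
  rewrite (ee_eq d n). fold v. rewrite nrm_back.
  rewrite (vsum_ext _ (fun k => vscal H (inner H (d n) (ee d k)) (ee d k))).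
  2:{ intros k Hk. apply Nat.ltb_lt in Hk. rewrite Hk. reflexivity. }
  fold (proj (ee d) n (d n)). unfold v, resid, vsub.
  rewrite (vaddC H (d n)), vaddA, vaddN, vaddC, vadd0. reflexivity.
Qed.

Lemma re_sym {H : InnerProductSpace} (a b : H) : re (inner H a b) = re (inner H b a).
Proof. rewrite inner_conj. reflexivity. Qed.

Lemma re_sub2 {H : InnerProductSpace} (a b : H) :
  re (inner H (vsub H a b) (vsub H a b)) =
  re (inner H a a) - 2 * re (inner H a b) + re (inner H b b).
Proof. rewrite in_subl, !in_subr. simpl. rewrite (re_sym b a). ring. Qed.

Lemma pyth {H : InnerProductSpace} (e : nat -> H) N x :
  unitish e -> orth e N ->
  re (inner H (vsub H x (proj e N x)) (vsub H x (proj e N x))) =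
  re (inner H x x) - rs (fun k => Cmod (inner H x (e k)) ^ 2) N.
Proof.
  intros U O.
  assert (Z : inner H (vsub H x (proj e N x)) (proj e N x) = Czero).
  { apply in_comb_zero. intros; apply resid_orth; auto. }
  rewrite re_sub2.
  rewrite in_subl in Z. injection Z as Z1 Z2.
  assert (re (inner H (proj e N x) x) = rs (fun k => Cmod (inner H x (e k)) ^ 2) N).
  { unfold proj. rewrite in_vsum_l, re_Csum. apply rs_ext. intros k _.
    rewrite inner_scall, (inner_conj H (e k) x), Cmod2. simpl. ring. }
  rewrite re_sym in H0. lra.
Qed.

Lemma bessel {H : InnerProductSpace} (e : nat -> H) N x :
  unitish e -> orth e N ->
  rs (fun k => Cmod (inner H x (e k)) ^ 2) N <= re (inner H x x).
Proof.
  intros U O. pose proof (pyth e N x U O). pose proof (inner_pos H (vsub H x (proj e N x))). lra.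
Qed.

Lemma best {H : InnerProductSpace} (e : nat -> H) N x c :
  unitish e -> orth e N ->
  re (inner H (vsub H x (proj e N x)) (vsub H x (proj e N x))) <=
  re (inner H (vsub H x (vsum (fun k => vscal H (c k) (e k)) N))
               (vsub H x (vsum (fun k => vscal H (c k) (e k)) N))).
Proof.
  intros U O. set (P := proj e N x). set (y := vsum (fun k => vscal H (c k) (e k)) N).
  assert (Z1 : inner H (vsub H x P) P = Czero).
  { apply in_comb_zero. intros; apply resid_orth; auto. }
  assert (Z2 : inner H (vsub H x P) y = Czero).
  { apply in_comb_zero. intros; apply resid_orth; auto. }
  rewrite in_subl in Z1, Z2. injection Z1 as A1 _. injection Z2 as A2 _.
  rewrite !re_sub2. pose proof (inner_pos H (vsub H P y)). rewrite re_sub2 in H0.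
  lra.
Qed.

Lemma block (g : nat -> R) K :
  rs (fun n => g (Nat.log2 (S n))) (2 ^ K - 1)%nat = rs (fun k => 2 ^ k * g k) K.
Proof.
  induction K. reflexivity.
  assert (P : (1 <= 2 ^ K)%nat) by (pose proof (Nat.pow_gt_lin_r 2 K); lia).
  replace (2 ^ S K - 1)%nat with ((2 ^ K - 1) + 2 ^ K)%nat by (rewrite Nat.pow_succ_r'; lia).
  rewrite rs_add, IHK. cbn [rs]. f_equal.
  rewrite (rs_ext _ (fun _ => g K)).
  - rewrite rs_const, pow_INR. replace (INR 2) with 2 by (simpl; ring). ring.
  - intros j Hj. f_equal. apply Nat.log2_unique. lia. rewrite Nat.pow_succ_r'. lia.
Qed.

Lemma geom q K : 0 <= q < 1 -> rs (fun k => q ^ k) K <= / (1 - q).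
Proof.
  intros Hq. assert (E : rs (fun k => q ^ k) K * (1 - q) = 1 - q ^ K).
  { induction K; simpl. ring. rewrite Rmult_plus_distr_r, IHK. ring. }
  assert (0 <= q ^ K) by (apply pow_le; lra).
  apply Rmult_le_reg_r with (1 - q). lra. rewrite E. field_simplify; lra.
Qed.

Definition rr (p : R) : R := Rpower (/ 2) (/ p).
Definition tt (p : R) (k : nat) : R := rr p ^ Nat.log2 (S k).

Lemma rr_pos p : 0 < rr p.
Proof. unfold rr, Rpower. apply exp_pos. Qed.

Lemma rr_small p : 0 < p < 1 -> 2 * rr p < 1.
Proof.
  intros Hp. unfold rr, Rpower. rewrite ln_Rinv by lra.
  assert (L : 0 < ln 2) by (pose proof ln_lt_2; lra).
  assert (1 < / p) by (rewrite <- Rinv_1; apply Rinv_lt_contravar; lra).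
  assert (exp (/ p * - ln 2) < exp (- ln 2)) by (apply exp_increasing; nra).
  rewrite exp_Ropp, exp_ln in H0 by lra. lra.
Qed.

Lemma tt_pos p k : 0 < tt p k.
Proof. unfold tt. apply pow_lt, rr_pos. Qed.

Lemma tt_bound p n : 0 < p < 1 -> rs (tt p) n <= / (1 - 2 * rr p).
Proof.
  intros Hp. pose proof (rr_small p Hp). pose proof (rr_pos p).
  assert (n <= 2 ^ n - 1)%nat by (pose proof (Nat.pow_gt_lin_r 2 n); lia).
  apply Rle_trans with (rs (tt p) (2 ^ n - 1)).
  { apply rs_mono; auto. intros; left; apply tt_pos. }
  unfold tt. rewrite (block (fun k => rr p ^ k)).
  rewrite (rs_ext _ (fun k => (2 * rr p) ^ k)). apply geom; lra.
  intros; rewrite Rpow_mult_distr; ring.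
Qed.

Lemma tt_rpow p k : 0 < p -> Rpower (tt p k) p = (/ 2) ^ Nat.log2 (S k).
Proof.
  intros Hp. unfold tt, rr. rewrite <- Rpower_pow by (unfold Rpower; apply exp_pos).
  rewrite !Rpower_mult. rewrite <- Rpower_pow by lra. f_equal. field. lra.
Qed.

Lemma nat_unb x : exists n : nat, x < INR n.
Proof.
  destruct (archimed x) as [A _]. exists (Z.to_nat (up x)).
  destruct (Z_le_gt_dec 0 (up x)) as [P|P].
  - rewrite INR_IZR_INZ, Z2Nat.id by lia. lra.
  - assert (P2 : (up x < 0)%Z) by lia. apply IZR_lt in P2. pose proof (pos_INR (Z.to_nat (up x))). simpl in P2. lra.
Qed.

Lemma polar {H : InnerProductSpace} (T : H -> H) :
  (forall x y, T (vadd H x y) = vadd H (T x) (T y)) ->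
  (forall a x, T (vscal H a x) = vscal H a (T x)) ->
  (forall u, inner H (T u) u = Czero) -> forall x, T x = vzero H.
Proof.
  intros Ad Sc Z x.
  assert (K : forall y, inner H (T x) y = Czero).
  { intros y.
    pose proof (Z (vadd H x y)) as E1. rewrite Ad, inner_addl, !in_addr, Z, Z in E1.
    pose proof (Z (vadd H x (vscal H (mkC 0 1) y))) as E2.
    rewrite Ad, Sc, inner_addl, !in_addr, Z, inner_scall, !in_scalr, inner_scall, Z in E2.
    destruct (inner H (T x) y) as [a1 a2], (inner H (T y) x) as [b1 b2].
    unfold Cadd, Cmul, Czero, Cconj in *; simpl in *.
    injection E1 as E11 E12. injection E2 as E21 E22. csolve. }
  apply inner_def. rewrite K. reflexivity.
Qed.

Lemma Cmod_pos z : z <> Czero -> 0 < Cmod z.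
Proof.
  intros Hz. unfold Cmod. apply sqrt_lt_R0. destruct z as [a b].
  simpl. destruct (Req_dec a 0), (Req_dec b 0); subst.
  - exfalso; apply Hz; reflexivity.
  - nra. - nra. - nra.
Qed.

Lemma Cmod_sc s z : 0 <= s -> Cmod (mkC (s * re z) (s * im z)) = s * Cmod z.
Proof.
  intros Hs. unfold Cmod. simpl.
  replace (s * re z * (s * re z) + s * im z * (s * im z)) with ((s * s) * (re z * re z + im z * im z)) by ring.
  rewrite sqrt_mult by nra. rewrite sqrt_square by lra. reflexivity.
Qed.

Lemma rpow_nonneg t p : 0 <= rpow t p.
Proof. unfold rpow. destruct (Rlt_dec 0 t). left; apply exp_pos. lra. Qed.

Lemma vopp0 {H : InnerProductSpace} : vopp H (vzero H) = vzero H.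
Proof.
  rewrite <- (vadd0 H (vopp H (vzero H))), vaddC, vaddN. reflexivity.
Qed.

Theorem proposition19 (H : InnerProductSpace) (Hc : complete H) (Hs : separable H)
  (p : R) (hp0 : 0 < p) (hp1 : p < 1)
  (T : H -> H) (HT : bounded_linear H T) (Tnz : exists x : H, T x <> vzero H) :
  exists f : nat -> H, is_frame H f /\
    ~ in_lp p (fun n => inner H (T (f n)) (f n)).
Proof.
  destruct HT as [Ad [Sc _]].
  assert (Hu : exists u, inner H (T u) u <> Czero).
  { apply NNPP. intro N. destruct Tnz as [x0 Hx0]. apply Hx0. apply (polar T Ad Sc).
    intros u. apply NNPP. intro Hn. apply N. exists u; exact Hn. }
  destruct Hu as [u Hu]. destruct Hs as [d0 Hd0].
  set (d := fun n => match n with O => u | S m => d0 m end).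
  set (e := ee d).
  assert (U : unitish e) by apply ee_unit.
  assert (O : forall N, orth e N) by (intro; apply ee_orth).
  assert (Apx : forall x eps, eps > 0 -> exists N,
     re (inner H x x) - rs (fun k => Cmod (inner H x (e k)) ^ 2) N < eps).
  { intros x eps He. destruct (Hd0 x (sqrt eps)) as [m Hm]. apply sqrt_lt_R0; lra.
    destruct (d_span d (S m)) as [c Hcc]. exists (S (S m)).
    rewrite <- (pyth e (S (S m)) x U (O _)).
    eapply Rle_lt_trans. apply (best e (S (S m)) x c U (O _)).
    fold e in Hcc. rewrite <- Hcc. simpl d.
    rewrite <- vnorm2. pose proof (sqrt_pos (re (inner H (vsub H x (d0 m)) (vsub H x (d0 m))))).
    fold (vnorm H (vsub H x (d0 m))) in H0.
    pose proof (sqrt_sqrt eps ltac:(lra)). nra. }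
  set (c0 := inner H (T (e 0%nat)) (e 0%nat)).
  assert (Hc0 : c0 <> Czero).
  { unfold c0, e. rewrite ee_eq. fold e.
    replace (resid d e 0) with u.
    2:{ unfold resid, proj. simpl. unfold vsub. rewrite vopp0, vadd0. reflexivity. }
    unfold nrm. rewrite Sc, inner_scall, in_scalr.
    assert (Pu : 0 < re (inner H u u)).
    { destruct (inner_pos H u) as [P|P]; auto. exfalso. apply Hu.
      rewrite (inner_def H u (eq_sym P)), in0r. reflexivity. }
    assert (Ps : 0 < / sqrt (re (inner H u u))) by (apply Rinv_0_lt_compat, sqrt_lt_R0; auto).
    set (s := / sqrt (re (inner H u u))) in *.
    destruct (inner H (T u) u) as [a b]. intro E. injection E as E1 E2. simpl in E1, E2.
    apply Hu. assert (a = 0) by (apply (Rmult_eq_reg_l (s*s)); [rewrite Rmult_0_r, <- E1; ring | nra]).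
    assert (b = 0) by (apply (Rmult_eq_reg_l (s*s)); [rewrite Rmult_0_r, <- E2; ring | nra]). subst. reflexivity. }
  set (a := fun k => sqrt (tt p k)).
  assert (Ha : forall k, a k * a k = tt p k).
  { intro k. apply sqrt_sqrt. left; apply tt_pos. }
  set (f := fun n => if Nat.even n then e (Nat.div2 n) else vscal H (mkC (a (Nat.div2 n)) 0) (e 0%nat)).
  assert (fe : forall k, f (2 * k)%nat = e k).
  { intro k. unfold f. rewrite Nat.even_even, Nat.div2_double. reflexivity. }
  assert (fo : forall k, f (S (2 * k)) = vscal H (mkC (a k) 0) (e 0%nat)).
  { intro k. unfold f. replace (S (2 * k)) with (2 * k + 1)%nat by lia.
    rewrite Nat.even_odd, Nat.div2_odd'. reflexivity. }
  set (B := / (1 - 2 * rr p)).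
  assert (HB : 0 < B) by (apply Rinv_0_lt_compat; pose proof (rr_small p (conj hp0 hp1)); lra).
  exists f. split.
  - exists 1, (1 + B). split. lra. split. lra.
    intro x. set (h := fun n => Cmod (inner H x (f n)) ^ 2).
    assert (h0 : forall n, 0 <= h n) by (intro; apply pow2_ge_0).
    assert (hp : forall k, h (2 * k)%nat + h (S (2 * k)) =
        Cmod (inner H x (e k)) ^ 2 + tt p k * Cmod (inner H x (e 0%nat)) ^ 2).
    { intro k. unfold h. rewrite fe, fo, in_scalr. f_equal. rewrite !Cmod2. simpl.
      rewrite <- Ha. ring. }
    assert (Hx0 : Cmod (inner H x (e 0%nat)) ^ 2 <= re (inner H x x)).
    { pose proof (bessel e 1 x U (O _)). simpl in H0. lra. }
    assert (Bd : forall n, rs h n <= (1 + B) * re (inner H x x)).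
    { intro n. apply Rle_trans with (rs h (2 * n)). apply rs_mono; auto; lia.
      rewrite rs_pair, (rs_ext _ _ n (fun k _ => hp k)), rs_plus.
      rewrite (rs_ext (fun k => tt p k * _) (fun k => Cmod (inner H x (e 0%nat)) ^ 2 * tt p k)) by (intros; ring).
      rewrite rs_scal. pose proof (bessel e n x U (O _)). pose proof (tt_bound p n (conj hp0 hp1)).
      fold B in H1. pose proof (rs_nonneg (tt p) n (fun k => Rlt_le _ _ (tt_pos p k))).
      pose proof (pow2_ge_0 (Cmod (inner H x (e 0%nat)))). nra. }
    assert (G : Un_growing (fun n => sum_f_R0 h n)).
    { intro n. simpl. specialize (h0 (S n)). lra. }
    destruct (growing_cv (fun n => sum_f_R0 h n) G) as [Sm HS].
    { exists ((1 + B) * re (inner H x x)). intros y [n ->]. rewrite sum_f_rs. apply Bd. }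
    exists Sm. rewrite vnorm2. split. exact HS. split.
    + apply Rnot_lt_le. intro Lt.
      destruct (Apx x (re (inner H x x) - 1 * Sm)) as [N HN]. lra.
      assert (rs (fun k => Cmod (inner H x (e k)) ^ 2) N <= Sm).
      { apply Rle_trans with (rs h (2 * N)).
        rewrite rs_pair, (rs_ext _ _ N (fun k _ => hp k)), rs_plus.
        pose proof (rs_nonneg (fun k => tt p k * Cmod (inner H x (e 0%nat)) ^ 2) N
          (fun k => Rmult_le_pos _ _ (Rlt_le _ _ (tt_pos p k)) (pow2_ge_0 _))). lra.
        apply Rle_trans with (rs h (S (2 * N))). apply rs_mono; auto.
        rewrite <- sum_f_rs. apply (growing_ineq _ _ G HS). }
      lra.
    + apply Rnot_lt_le. intro Lt.
      destruct (HS (Sm - (1 + B) * re (inner H x x))) as [N HN]. lra.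
      specialize (HN N (le_n _)). rewrite sum_f_rs in HN. specialize (Bd (S N)).
      unfold Rdist in HN. apply Rabs_def2 in HN. lra.
  - intros [Sm HS].
    set (q := fun n => rpow (Cmod (inner H (T (f n)) (f n))) p).
    assert (q0 : forall n, 0 <= q n) by (intro; apply rpow_nonneg).
    assert (G : Un_growing (fun n => sum_f_R0 q n)).
    { intro n. simpl. specialize (q0 (S n)). lra. }
    assert (Le : forall n, sum_f_R0 q n <= Sm) by (apply growing_ineq; auto).
    pose proof (Cmod_pos c0 Hc0) as Pm. set (m := Cmod c0) in *.
    set (mp := Rpower m p).
    assert (Pmp : 0 < mp) by (unfold mp, Rpower; apply exp_pos).
    assert (qo : forall k, q (S (2 * k)) = (/ 2) ^ Nat.log2 (S k) * mp).
    { intro k. unfold q. rewrite fo, Sc, inner_scall, in_scalr. fold c0.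
      replace (Cmul _ _) with (mkC (tt p k * re c0) (tt p k * im c0)).
      2:{ rewrite <- Ha. csolve. }
      rewrite Cmod_sc by (left; apply tt_pos). fold m.
      unfold rpow. destruct (Rlt_dec 0 (tt p k * m)) as [_|N].
      2:{ exfalso. apply N. apply Rmult_lt_0_compat; auto. apply tt_pos. }
      rewrite <- Rpower_mult_distr; auto. rewrite tt_rpow; auto. apply tt_pos. }
    destruct (nat_unb (Sm / mp)) as [J HJ].
    set (K := (2 ^ J - 1)%nat).
    assert (rs q (2 * K) >= INR J * mp).
    { rewrite rs_pair.
      apply Rle_ge, Rle_trans with (rs (fun k => q (S (2 * k))) K).
      2:{ apply rs_le. intro k. specialize (q0 (2 * k)%nat). lra. }
      rewrite (rs_ext _ (fun k => (fun j => (/ 2) ^ j * mp) (Nat.log2 (S k)))) by (intros; apply qo).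
      unfold K. pose proof (block (fun j => (/ 2) ^ j * mp) J) as BL. cbv beta in BL. rewrite BL. rewrite (rs_ext _ (fun _ => mp)). rewrite rs_const. lra.
      intros j _. rewrite <- Rmult_assoc, <- Rpow_mult_distr, Rinv_r, pow1 by lra. ring. }
    assert (rs q (2 * K) <= Sm).
    { apply Rle_trans with (rs q (S (2 * K))). apply rs_mono; auto.
      rewrite <- sum_f_rs. apply Le. }
    assert (Sm / mp * mp = Sm) by (field; lra). nra.
Qed.
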